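(* Let $(A,\vee,\perp,0)$ be a quasi-orthomodular nearsemilattice, and define a partial binary operation $\oplus$ on $A$ by: $x \oplus y = z$ if and only if $x \perp y$ and $z = x \vee y$. Then $(A,\oplus,0)$ is a generalized orthoalgebra, and its natural ordering coincides with the nearsemilattice ordering of $A$.
   Context: A nearsemilattice is a poset $A$ with least element $0$ in which any two elements having a common upper bound have a join $x \vee y$ (a partial operation). An orthogonality on $A$ is a binary relation $\perp$ with: $x \perp y$ implies $y \perp x$; $x \le y$ and $y \perp z$ imply $x \perp z$; $x \perp 0$ for all $x$. A quasi-orthomodular nearsemilattice is a nearsemilattice with an orthogonality such that: (a) if $x \perp y$ then $x \vee y$ exists; (b) if $x \le y$ then $y = x \vee z$ for some $z$ with $x \perp z$; (c) if $x \perp y$, $x \perp z$ and $y \le x \vee z$, then $y \le z$. A generalized orthoalgebra is a system $(A,\oplus,0)$ with $\oplus$ a partial binary operation (write $s \perp t$ to mean $s \oplus t$ is defined) satisfying: (1) if $x \perp y$ then $y \perp x$ and $x \oplus y = y \oplus x$; (2) if $x \perp y$ and $x \oplus y \perp z$, then $y \perp z$, $x \perp y \oplus z$ and $(x \oplus y) \oplus z = x \oplus (y \oplus z)$; (3) $x \perp 0$ and $x \oplus 0 = x$; (4) if $x \perp y$, $x \perp z$ and $x \oplus y = x \oplus z$, then $y = z$; (5) if $x \perp x$ then $x = 0$. Its natural ordering is: $x \le y$ iff $y = x \oplus z$ for some $z$ with $x \perp z$. *)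

(* Defs.v *)
(* Plain Rocq (no library needed). Partial binary operations are represented
   by their graphs: [op x y z] means "x (+) y is defined and equals z". *)

Section Defs.
Variable T : Type.

Definition is_poset (le : T -> T -> Prop) : Prop :=
  (forall x, le x x) /\
  (forall x y, le x y -> le y x -> x = y) /\
  (forall x y z, le x y -> le y z -> le x z).

Definition is_ub (le : T -> T -> Prop) (x y u : T) : Prop := le x u /\ le y u.

Definition is_join (le : T -> T -> Prop) (x y z : T) : Prop :=
  is_ub le x y z /\ (forall u, is_ub le x y u -> le z u).

Definition nearsemilattice (le : T -> T -> Prop) (zero : T) : Prop :=
  is_poset le /\
  (forall x, le zero x) /\
  (forall x y, (exists u, is_ub le x y u) -> exists z, is_join le x y z).

Definition orthogonality (le : T -> T -> Prop) (zero : T)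
  (orth : T -> T -> Prop) : Prop :=
  (forall x y, orth x y -> orth y x) /\
  (forall x y z, le x y -> orth y z -> orth x z) /\
  (forall x, orth x zero).

Definition quasi_orthomodular_nearsemilattice (le : T -> T -> Prop) (zero : T)
  (orth : T -> T -> Prop) : Prop :=
  nearsemilattice le zero /\
  orthogonality le zero orth /\
  (forall x y, orth x y -> exists z, is_join le x y z) /\
  (forall x y, le x y -> exists z, orth x z /\ is_join le x z y) /\
  (forall x y z, orth x y -> orth x z ->
               (exists w, is_join le x z w /\ le y w) -> le y z).

Definition partial_op (op : T -> T -> T -> Prop) : Prop :=
  forall x y z z', op x y z -> op x y z' -> z = z'.

Definition generalized_orthoalgebra (op : T -> T -> T -> Prop) (zero : T) : Prop :=
  partial_op op /\
  (forall x y z, op x y z -> op y x z) /\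
  (* (2) x _|_ y, (x (+) y) _|_ z -> y _|_ z, x _|_ (y (+) z),
         (x (+) y) (+) z = x (+) (y (+) z) *)
  (forall x y u z w, op x y u -> op u z w ->
      exists v, op y z v /\ op x v w) /\
  (forall x, op x zero x) /\
  (forall x y z u, op x y u -> op x z u -> y = z) /\
  (forall x u, op x x u -> x = zero).

Definition goa_le (op : T -> T -> T -> Prop) (x y : T) : Prop :=
  exists z, op x z y.

Definition qonsl_oplus (le : T -> T -> Prop) (orth : T -> T -> Prop)
  (x y z : T) : Prop :=
  orth x y /\ is_join le x y z.

End Defs.

(* Main.v *)
Require Import Defs.

Theorem theorem3 (T : Type) (le : T -> T -> Prop) (zero : T)
  (orth : T -> T -> Prop) :
  quasi_orthomodular_nearsemilattice T le zero orth ->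
  generalized_orthoalgebra T (qonsl_oplus T le orth) zero /\
  (forall x y, goa_le T (qonsl_oplus T le orth) x y <-> le x y).
Proof.
  intros [[[refl [antis trans]] [bot _]] [[osym [odown o0]] [Ha [Hb Hc]]]].
  unfold qonsl_oplus, is_join, is_ub in *.
  assert (J0 : forall x, is_join T le x zero x).
  { intro x. split; [split; auto|]. intros u [H1 H2]; exact H1. }
  unfold is_join, is_ub in J0.
  assert (Juniq : forall x y z z', is_join T le x y z -> is_join T le x y z' -> z = z').
  { intros x y z z' [U1 L1] [U2 L2]. apply antis; auto. }
  unfold is_join, is_ub in Juniq.
  assert (Jsym : forall x y z, is_join T le x y z -> is_join T le y x z).
  { intros x y z [[U1 U2] L]. split; [split; auto|]. intros u [V1 V2]; apply L; split; auto. }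
  unfold is_join, is_ub in Jsym.
  assert (Oself : forall s, orth s s -> s = zero).
  { intros s Hs. apply antis; [|apply bot].
    apply (Hc s s zero Hs (o0 s)). exists s. split; [apply J0|apply refl]. }
  split.
  - split; [|split; [|split; [|split]]].
    + intros x y z z' [_ H1] [_ H2]. eapply Juniq; eauto.
    + intros x y z [O J]. split; auto.
    + intros x y u z w [Oxy [[Xu Yu] Lu]] [Ouz [[Uw Zw] Lw]].
      assert (Oyz : orth y z) by (eapply odown; eauto).
      assert (Oxz : orth x z) by (eapply odown; eauto).
      destruct (Ha y z Oyz) as [v [[Yv Zv] Lv]].
      assert (Vw : le v w) by (apply Lv; split; eapply trans; eauto).
      destruct (Hb v w Vw) as [t [Ovt [[Vw' Tw] Lt]]].
      assert (Oyt : orth y t) by (eapply odown; eauto).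
      assert (Ozt : orth z t) by (eapply odown; eauto).
      assert (Tu : le t u).
      { apply (Hc z t u Ozt (osym _ _ Ouz)).
        exists w. split; [apply Jsym; split; [split; auto|auto]|auto]. }
      assert (Tx : le t x).
      { apply (Hc y t x Oyt (osym _ _ Oxy)).
        exists u. split; [apply Jsym; split; [split; auto|auto]|auto]. }
      destruct (Hb t x Tx) as [s [Ots [[Tx' Sx] Ls]]].
      assert (Sw : le s w) by (eapply trans; [exact Sx|eapply trans; eauto]).
      assert (Sv : le s v).
      { apply (Hc t s v Ots (osym _ _ Ovt)).
        exists w. split; [apply Jsym; split; [split; auto|auto]|auto]. }
      assert (Oys : orth y s) by (apply osym; eapply odown; [exact Sx| exact Oxy]).
      assert (Sz : le s z).
      { apply (Hc y s z Oys Oyz). exists v. split; [split; [split; auto|auto]|auto]. }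
      assert (Osz : orth s z) by (eapply odown; [exact Sx|exact Oxz]).
      assert (Oss : orth s s) by (apply osym; eapply odown; [exact Sz| apply osym; exact Osz]).
      pose proof (Oself s Oss) as E. subst s.
      assert (Ext : x = t).
      { apply antis; [apply Ls; split; [apply refl|apply bot]|exact Tx]. }
      subst t.
      exists v. split.
      * split; auto.
      * split; [apply osym; exact Ovt|].
        apply Jsym. split; [split; auto|auto].
    + intro x. split; [apply o0|apply J0].
    + split.
      * intros x y z u [Oxy Jy] [Oxz Jz].
        assert (L1 : le y z).
        { apply (Hc x y z Oxy Oxz). exists u. split; auto. destruct Jy as [[_ H] _]; auto. }
        assert (L2 : le z y).
        { apply (Hc x z y Oxz Oxy). exists u. split; auto. destruct Jz as [[_ H] _]; auto. }
        apply antis; auto.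
      * intros x u [O _]. apply Oself; auto.
  - intros x y. unfold goa_le. split.
    + intros [z [_ [[H _] _]]]. exact H.
    + intro H. destruct (Hb x y H) as [z [O J]]. exists z. split; auto.
Qed.
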